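(* Let $(X,S,\beta)$ be a virtual pair, $H$ a group, and let $(f,g)$ and $(\tilde f,g)$ be two cohomologous noncommutative 2-cocycle pairs $X\times X\to H$. Then for every oriented virtual link diagram $L=K_1\cup\dots\cup K_r$, every coloring $\mathcal C$ of $L$ by $(X,S,\beta)$ and every $i$, $[\Psi_i(L,\mathcal C,f,g)]=[\Psi_i(L,\mathcal C,\tilde f,g)]$ (equality of conjugacy classes in $H$).
   Context: For a bijection $\sigma\colon X\times X\to X\times X$ write $\sigma(x,y)=(\sigma^1(x,y),\sigma^2(x,y))$. A biquandle is a bijection $\sigma$ satisfying $(\mathrm{id}\times\sigma)(\sigma\times\mathrm{id})(\mathrm{id}\times\sigma)=(\sigma\times\mathrm{id})(\mathrm{id}\times\sigma)(\sigma\times\mathrm{id})$, such that for all $x,z$ there is a unique $y$ with $\sigma^1(x,y)=z$, for all $y,t$ there is a unique $x$ with $\sigma^2(x,y)=t$, and there is a bijection $s_\sigma$ with $\{(x,y):\sigma(x,y)=(x,y)\}=\{(x,s_\sigma(x))\}$. A virtual pair $(X,S,\beta)$: biquandles $(X,S),(X,\beta)$ with $\beta^2=\mathrm{id}$ and $(\mathrm{id}\times\beta)(S\times\mathrm{id})(\mathrm{id}\times\beta)=(\beta\times\mathrm{id})(\mathrm{id}\times S)(\beta\times\mathrm{id})$; write $s=s_S$, $s_\beta$. A noncommutative 2-cocycle pair is $f,g\colon X\times X\to H$ with, for all $x,y,z$: (f1) $f(x,y)f(S^2(x,y),z)=f(x,S^1(y,z))f(S^2(x,S^1(y,z)),S^2(y,z))$;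 (f2) $f(S^1(x,y),S^1(S^2(x,y),z))=f(y,z)$; (f3) $f(x,s(x))=1$; (g1) $g(x,s_\beta(x))=1$; (g2) $g(x,y)g(\beta(x,y))=1$; (g3) $g(x,y)g(\beta^2(x,y),z)=g(x,\beta^1(y,z))g(\beta^2(x,\beta^1(y,z)),\beta^2(y,z))$; (g4) $g(y,z)g(\beta^2(x,\beta^1(y,z)),\beta^2(y,z))=g(x,y)g(\beta^1(x,y),\beta^1(\beta^2(x,y),z))$; (g5) $g(y,z)g(x,\beta^1(y,z))=g(\beta^2(x,y),z)g(\beta^1(x,y),\beta^1(\beta^2(x,y),z))$; (m1) $g(y,z)=g(S^1(x,y),\beta^1(S^2(x,y),z))$; (m2) $g(y,z)g(x,\beta^1(y,z))=g(S^2(x,y),z)g(S^1(x,y),\beta^1(S^2(x,y),z))$; (m3) $g(x,\beta^1(y,z))f(\beta^2(x,\beta^1(y,z)),\beta^2(y,z))=f(x,y)g(S^2(x,y),z)$. $(f,g)$ and $(\tilde f,g)$ are cohomologous if there is $\lambda\colon X\to H$ with $\tilde f(x,y)=\lambda(x)f(x,y)\lambda(S^2(x,y))^{-1}$ for all $x,y$, where for all $x,y$: $\lambda(x)=\lambda(s_S(x))$, $\lambda(y)=\lambda(S^1(x,y))$, $\lambda(y)=\lambda(\beta^1(x,y))$, and $\lambda(x)$ commutes with $g(x,y)$. Colorings and $\Psi_i$: drawing each crossing with both strands oriented downward, a coloring assigns elements of $X$ to semi-arcs such that at a positive classical crossing (under-strand top-left to bottom-right, over-strand top-right to bottom-left)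 with incoming colors $x$ (top-left), $y$ (top-right) the outgoing colors are $S^1(x,y)$ (bottom-left), $S^2(x,y)$ (bottom-right); at a negative classical crossing (over-strand top-left to bottom-right, under-strand top-right to bottom-left) with outgoing colors $x$ (bottom-left), $y$ (bottom-right) the incoming colors are $S^1(x,y)$ (top-left), $S^2(x,y)$ (top-right); at a virtual crossing with incoming $x$ (top-left), $y$ (top-right) the outgoing colors are $\beta^1(x,y)$ (bottom-left), $\beta^2(x,y)$ (bottom-right). Weights: $f(x,y)$ at a positive crossing, $f(x,y)^{-1}$ at a negative crossing, $g(x,y)$ at a virtual crossing (notation as just described). Choosing a base point on $K_i$, $\Psi_i(L,\mathcal C,f,g)$ is the product, in the order met while traversing $K_i$ along its orientation, of the weights of the classical crossings where $K_i$ passes along the under-strand and of the virtual crossings through which $K_i$ passes. $[h]$ is the conjugacy class of $h$. *)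

(* Defs.v *)
From mathcomp Require Import all_boot all_fingroup.
Set Implicit Arguments.
Unset Strict Implicit.
Unset Printing Implicit Defensive.

Record abs_group := AbsGroup {
  gcar :> Type;
  gmul : gcar -> gcar -> gcar;
  gone : gcar;
  ginv : gcar -> gcar;
  gmulA : forall a b c, gmul a (gmul b c) = gmul (gmul a b) c;
  gmul1 : forall a, gmul gone a = a;
  gmulr1 : forall a, gmul a gone = a;
  gmulV : forall a, gmul (ginv a) a = gone;
  gmulrV : forall a, gmul a (ginv a) = gone }.

Arguments gmul {a0}.
Arguments gone {a0}.
Arguments ginv {a0}.

Section Biquandles.
Variable X : Type.
Implicit Types (sigma : X * X -> X * X).

Definition c1 sigma x y := (sigma (x, y)).1.
Definition c2 sigma x y := (sigma (x, y)).2.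

Definition idx sigma (t : X * X * X) : X * X * X :=
  (t.1.1, (sigma (t.1.2, t.2)).1, (sigma (t.1.2, t.2)).2).
Definition xid sigma (t : X * X * X) : X * X * X :=
  ((sigma t.1).1, (sigma t.1).2, t.2).

Definition is_sfun sigma (s : X -> X) :=
  bijective s /\ (forall x y, sigma (x, y) = (x, y) <-> y = s x).

Definition is_biquandle sigma :=
  [/\ bijective sigma,
      (forall t, idx sigma (xid sigma (idx sigma t)) = xid sigma (idx sigma (xid sigma t))),
      (forall x z, exists! y, c1 sigma x y = z),
      (forall y t, exists! x, c2 sigma x y = t)
    & exists s, is_sfun sigma s].

Definition virtual_pair (S beta : X * X -> X * X) :=
  [/\ is_biquandle S, is_biquandle beta,
      (forall p, beta (beta p) = p)
    & (forall t, idx beta (xid S (idx beta t)) = xid beta (idx S (xid beta t)))].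
End Biquandles.

Section Cocycles.
Variables (X : Type) (H : abs_group) (S beta : X * X -> X * X) (s sb : X -> X).
Local Notation "a * b" := (gmul a b).
Local Notation "1" := (@gone H).
Local Notation S1 := (c1 S).
Local Notation S2 := (c2 S).
Local Notation B1 := (c1 beta).
Local Notation B2 := (c2 beta).

(* noncommutative 2-cocycle pair (f,g); s = s_S, sb = s_beta *)
Definition cocycle_pair (f g : X -> X -> H) :=
  (forall x y z, f x y * f (S2 x y) z = f x (S1 y z) * f (S2 x (S1 y z)) (S2 y z)) /\
  (forall x y z, f (S1 x y) (S1 (S2 x y) z) = f y z) /\
  (forall x, f x (s x) = 1) /\
  (forall x, g x (sb x) = 1) /\
  (forall x y, g x y * g (B1 x y) (B2 x y) = 1) /\
  (forall x y z, g x y * g (B2 x y) z = g x (B1 y z) * g (B2 x (B1 y z)) (B2 y z)) /\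
  (forall x y z, g y z * g (B2 x (B1 y z)) (B2 y z) = g x y * g (B1 x y) (B1 (B2 x y) z)) /\
  (forall x y z, g y z * g x (B1 y z) = g (B2 x y) z * g (B1 x y) (B1 (B2 x y) z)) /\
  (forall x y z, g y z = g (S1 x y) (B1 (S2 x y) z)) /\
  (forall x y z, g y z * g x (B1 y z) = g (S2 x y) z * g (S1 x y) (B1 (S2 x y) z)) /\
  (forall x y z, g x (B1 y z) * f (B2 x (B1 y z)) (B2 y z) = f x y * g (S2 x y) z).

Definition cohomologous (f ft g : X -> X -> H) :=
  exists lam : X -> H,
    forall x y,
      [/\ ft x y = (lam x * f x y) * ginv (lam (S2 x y)),
          lam x = lam (s x),
          lam y = lam (S1 x y),
          lam y = lam (B1 x y)
        & lam x * g x y = g x y * lam x].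
End Cocycles.

(* ---------- Oriented virtual link diagrams (combinatorial model) ----------
   Crossings are indexed by 'I_ncr, each drawn with both strands going down.
   A port is (c, side) with side = false for left, true for right.
   Each crossing has incoming ports (top-left, top-right) and outgoing ports
   (bottom-left, bottom-right). A semi-arc leaves outgoing port o and enters
   incoming port (nxt o); nxt is a bijection.  In every crossing type the strand
   entering top-left leaves bottom-right and the one entering top-right leaves
   bottom-left. *)
Inductive ctype := Pos | Neg | Virt.

Record vdiagram := VDiagram {
  ncr : nat;
  kind : 'I_ncr -> ctype;
  nxt : {perm ('I_ncr * bool)} }.

Definition step (D : vdiagram) (p : 'I_(ncr D) * bool) : 'I_(ncr D) * bool :=
  nxt D (p.1, ~~ p.2).

Section Colorings.
Variables (X : Type) (S beta : X * X -> X * X) (D : vdiagram).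
(* a coloring assigns to each semi-arc (identified with its terminal incoming
   port) a color *)
Variable col : 'I_(ncr D) * bool -> X.
Definition cin c (b : bool) := col (c, b).
Definition cout c (b : bool) := col (nxt D (c, b)).

Definition is_coloring :=
  forall c, match kind c with
  | Pos => S (cin c false, cin c true) = (cout c false, cout c true)
  | Neg => S (cout c false, cout c true) = (cin c false, cin c true)
  | Virt => beta (cin c false, cin c true) = (cout c false, cout c true)
  end.

Variables (H : abs_group) (f g : X -> X -> H).
(* weight picked up when traversing crossing p.1 entering at side p.2 *)
Definition weight (p : 'I_(ncr D) * bool) : H :=
  let c := p.1 in
  match kind c with
  | Pos => if p.2 then gone else f (cin c false) (cin c true)     (* under: TL -> BR *)
  | Neg => if p.2 then ginv (f (cout c false) (cout c true)) else gone (* under: TR -> BL *)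
  | Virt => g (cin c false) (cin c true)
  end.

(* Psi of the component through base point p (an incoming port), reading the
   weights in the order met along the orientation *)
Definition Psi (p : 'I_(ncr D) * bool) : H :=
  foldr gmul gone (map weight (fingraph.orbit (@step D) p)).
End Colorings.

(* Main.v *)
Require Import Defs.
From mathcomp Require Import all_boot all_fingroup.

Section G.
Variable H : abs_group.
Local Notation "a * b" := (@gmul H a b).

Lemma gmulKg (a b : H) : ginv a * (a * b) = b.
Proof. by rewrite gmulA gmulV gmul1. Qed.

Lemma gmulKVg (a b : H) : a * (ginv a * b) = b.
Proof. by rewrite gmulA gmulrV gmul1. Qed.

Lemma ginvK (a : H) : ginv (ginv a) = a.
Proof. by rewrite -[RHS](gmulKg (ginv a)) gmulV gmulr1. Qed.

Lemma ginvM (a b : H) : ginv (a * b) = ginv b * ginv a.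
Proof.
rewrite -[RHS]gmulr1 -(gmulrV (a * b)) !gmulA.
by rewrite -(gmulA (ginv b)) gmulV gmulr1 gmulV gmul1.
Qed.

Lemma ginv_comm (a b : H) : a * b = b * a -> a * ginv b = ginv b * a.
Proof.
move=> E.
rewrite -[LHS]gmul1 -(gmulV b) -!gmulA; congr (_ * _).
by rewrite gmulA -E -gmulA gmulrV gmulr1.
Qed.
End G.

Theorem mainTheorem7 (X : Type) (H : abs_group) (S beta : X * X -> X * X)
    (s sb : X -> X) (f ft g : X -> X -> H) :
  virtual_pair S beta -> is_sfun S s -> is_sfun beta sb ->
  cocycle_pair S beta s sb f g -> cocycle_pair S beta s sb ft g ->
  cohomologous S beta s f ft g ->
  forall (D : vdiagram) (col : 'I_(ncr D) * bool -> X),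
    is_coloring S beta col ->
    forall p : 'I_(ncr D) * bool,
      exists h : H,
        Psi col f g p = gmul (gmul h (Psi col ft g p)) (ginv h).
Proof.
move=> [_ _ binv _] _ _ [_ [_ [_ [_ [g2 _]]]]] _ [lam Hl] D col Hcol p.
pose L q := lam (col q).
have Hw : forall q, weight col ft g q =
    gmul (gmul (L q) (weight col f g q)) (ginv (L (step q))).
  move=> [c b]; rewrite /weight /step /L /=.
  have := Hcol c; rewrite /cin /cout.
  case: (kind c) => E.
  - set x := col (c, false); set y := col (c, true).
    have o1 : col (nxt D (c, false)) = c1 S x y by rewrite /c1 E.
    have o2 : col (nxt D (c, true)) = c2 S x y by rewrite /c2 E.
    have [e1 _ e3 _ _] := Hl x y.
    case: b; [change (~~ true) with false | change (~~ false) with true]; rewrite -/x -/y ?o1 ?o2 /=.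
      by rewrite gmulr1 -e3 gmulrV.
    by rewrite e1.
  - set x := col (nxt D (c, false)); set y := col (nxt D (c, true)).
    have o1 : col (c, false) = c1 S x y by rewrite /c1 E.
    have o2 : col (c, true) = c2 S x y by rewrite /c2 E.
    have [e1 _ e3 _ _] := Hl x y.
    case: b; [change (~~ true) with false | change (~~ false) with true]; rewrite -/x -/y ?o1 ?o2 /=.
      rewrite e1 !ginvM ginvK !gmulA.
      by [].
    by rewrite gmulr1 -e3 gmulrV.
  - set x := col (c, false); set y := col (c, true).
    have o1 : col (nxt D (c, false)) = c1 beta x y by rewrite /c1 E.
    have o2 : col (nxt D (c, true)) = c2 beta x y by rewrite /c2 E.
    case: b; [change (~~ true) with false | change (~~ false) with true]; rewrite -/x -/y ?o1 ?o2 /=.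
      have [_ _ _ e4 _] := Hl x y.
      have [_ _ _ _ e5] := Hl (c1 beta x y) (c2 beta x y).
      have gi : g x y = ginv (g (c1 beta x y) (c2 beta x y)).
        by rewrite -[LHS]gmulr1 -(gmulrV (g (c1 beta x y) (c2 beta x y))) gmulA g2 gmul1.
      have cm : gmul (lam y) (g (c1 beta x y) (c2 beta x y)) = gmul (g (c1 beta x y) (c2 beta x y)) (lam y) by rewrite e4.
      rewrite -e4 gi (@ginv_comm H _ _ cm).
      by rewrite -gmulA gmulrV gmulr1.
    have [_ _ _ _ e5] := Hl x y.
    have [_ _ _ e4 _] := Hl (c1 beta x y) (c2 beta x y).
    have bb : beta (beta (x, y)) = (x, y) by apply: binv.
    have e4' : lam (c2 beta x y) = lam x.
      by rewrite e4 /c1 /c2 -surjective_pairing bb.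
    by rewrite e4' e5 -gmulA gmulrV gmulr1.
have tel : forall n q, foldr gmul gone (map (weight col ft g) (traject (@step D) q n)) =
   gmul (gmul (L q) (foldr gmul gone (map (weight col f g) (traject (@step D) q n))))
        (ginv (L (iter n (@step D) q))).
  elim=> [|n IH] q /=.
    by rewrite gmulr1 gmulrV.
  rewrite IH Hw -iterS iterSr -!gmulA; congr (gmul _ _); congr (gmul _ _).
  by rewrite gmulKg.
rewrite /Psi /orbit tel iter_order; last first.
  move=> [a1 a2] [b1 b2]; rewrite /step /= => /perm_inj [-> /negb_inj ->] //.
exists (ginv (L p)).
by rewrite ginvK !gmulA gmulV gmul1 -gmulA gmulV gmulr1.
Qed.
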